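(* Let $q$ be an odd prime power, $n=\frac{q+1}{2}$ and $\delta$ an integer with $2\leq\delta\leq\lfloor\frac{q+3}{4}\rfloor$. Then the negacyclic BCH code $\mathcal{C}_{(q,n,\delta,0)}$ has parameters $[n,n-2(\delta-1),2\delta-1]$. All of these codes are MDS.
   Context: Let $\ell$ be the order of $q$ modulo $2n$, $\alpha$ a primitive element of $\mathrm{GF}(q^\ell)$, $\beta=\alpha^{(q^\ell-1)/(2n)}$ (a primitive $2n$-th root of unity), and $\mathbb{M}_{\beta^j}(x)$ the minimal polynomial of $\beta^j$ over $\mathrm{GF}(q)$. For $2\leq\delta\leq n$, $\mathcal{C}_{(q,n,\delta,0)}$ is the negacyclic code of length $n$ over $\mathrm{GF}(q)$ (ideal of $\mathrm{GF}(q)[x]/(x^n+1)$) generated by $\mathrm{lcm}\big(\mathbb{M}_{\beta^{1}}(x),\mathbb{M}_{\beta^{3}}(x),\ldots,\mathbb{M}_{\beta^{1+2(\delta-2)}}(x)\big)$. An $[n,k,d]$ code is MDS if $d=n-k+1$. *)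

(* Defs.v *)
From HB Require Import structures.
From mathcomp Require Import all_boot all_order all_algebra all_field.
Set Implicit Arguments. Unset Strict Implicit. Unset Printing Implicit Defensive.
Import Order.TTheory GRing.Theory Num.Theory.
Local Open Scope ring_scope.

Definition polylcm (F : fieldType) (p r : {poly F}) : {poly F} :=
  let l := (p * r) %/ gcdp p r in (lead_coef l)^-1 *: l.

Definition is_minpoly (F : fieldType) (L : fieldExtType F) (x : L) (p : {poly F}) :=
  [/\ p \is monic, root (map_poly (in_alg L) p) x &
      forall r : {poly F}, r != 0 -> root (map_poly (in_alg L) r) x -> (size p <= size r)%N].

(* Elements of GF(q)[x]/(x^n+1) are represented by their coefficient vectors
   (polynomials of degree < n).  The negacyclic code generated by g is the
   ideal generated by g, i.e. the set of residues (a * g) mod (x^n + 1). *)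
Definition negacyclic_code (F : finFieldType) (n : nat) (g : {poly F}) : {set 'rV[F]_n} :=
  [set c | [exists a : 'rV[F]_n, rVpoly c == (rVpoly a * g) %% ('X^n + 1)]].

Definition code_dim (F : finFieldType) (n : nat) (C : {set 'rV[F]_n}) : nat :=
  \dim <<enum C>>%VS.

Definition hamming_dist (F : finFieldType) (n : nat) (c c' : 'rV[F]_n) : nat :=
  #|[set i : 'I_n | c 0 i != c' 0 i]|.

Definition is_min_distance (F : finFieldType) (n : nat) (C : {set 'rV[F]_n}) (d : nat) :=
  (exists c, exists c', [/\ c \in C, c' \in C, c != c' & hamming_dist c c' = d]) /\
  (forall c c', c \in C -> c' \in C -> c != c' -> (d <= hamming_dist c c')%N).

Definition is_MDS (F : finFieldType) (n : nat) (C : {set 'rV[F]_n}) :=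
  exists d, is_min_distance C d /\ d = (n - code_dim C + 1)%N.

(* generator lcm(M_{beta^1}, M_{beta^3}, ..., M_{beta^(1+2(delta-2))}) *)
Definition bch_gen (F : fieldType) (m : nat -> {poly F}) (delta : nat) : {poly F} :=
  \big[@polylcm F/1]_(i < delta.-1) m (1 + 2 * i)%N.

(* Main.v *)
Require Import Defs.
From HB Require Import structures.
From mathcomp Require Import all_boot all_order all_algebra all_field all_fingroup all_solvable.
From mathcomp Require Import zify ring.
Set Implicit Arguments. Unset Strict Implicit. Unset Printing Implicit Defensive.
Import Order.TTheory GRing.Theory Num.Theory.
Local Open Scope ring_scope.

Lemma polylcm_coprime (F : fieldType) (p r : {poly F}) :
  p \is monic -> r \is monic -> coprimep p r -> polylcm p r = p * r.
Proof.
move=> mp mr cpr; rewrite /polylcm.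
move: cpr; rewrite coprimep_def => /size_poly1P [c c0 ->].
have -> : c%:P = c *: (1 : {poly F}) by rewrite -mul_polyC mulr1.
rewrite divpZr // divp1 lead_coefZ.
have /monicP -> : p * r \is monic by rewrite monicMl.
by rewrite mulr1 scalerA mulVf ?invr_eq0 // scale1r.
Qed.

Lemma prim_inj (K : fieldType) (z : K) (N a c : nat) : N.-primitive_root z ->
  (a < N)%N -> (c < N)%N -> z ^+ a = z ^+ c -> a = c.
Proof.
move=> pz ha hc /eqP; rewrite (eq_prim_root_expr pz) !modn_small //; exact/eqP.
Qed.

Lemma bch (K : fieldType) (z g : K) (n D : nat) (c : {poly K}) :
  n.-primitive_root z -> g != 0 -> (size c <= n)%N -> c != 0 ->
  (forall t, (t < D)%N -> root c (g * z ^+ t)) ->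
  (D < #|[set i : 'I_n | (c`_i != 0)%R]|)%N.
Proof.
move=> pz g0 szc c0 hr; set S := [set i : 'I_n | c`_i != 0].
rewrite ltnNge; apply/negP => hS.
have szc0 : (0 < size c)%N by rewrite size_poly_gt0.
have k0n : ((size c).-1 < n)%N by rewrite prednK.
pose k0 : 'I_n := Ordinal k0n.
have k0S : k0 \in S by rewrite inE /= -lead_coefE lead_coef_eq0.
pose s := enum (S :\ k0).
pose P := \prod_(i <- s) ('X - (z ^+ i)%:P).
have szP : (size P <= D)%N.
  by rewrite size_prod_XsubC /s -cardE (cardsD1 k0 S) k0S in hS *.
have E0 : \sum_(t < D) P`_t * c.[g * z ^+ t] = 0.
  by apply: big1 => t _; rewrite (eqP (hr t (ltn_ord t))) mulr0.
have E1 : \sum_(t < D) P`_t * c.[g * z ^+ t] =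
          \sum_(i < n) c`_i * g ^+ i * P.[z ^+ i].
  under eq_bigr => t _ do rewrite (horner_coef_wide _ szc) mulr_sumr.
  rewrite exchange_big /=; apply: eq_bigr => i _.
  rewrite (horner_coef_wide _ szP) !mulr_sumr; apply: eq_bigr => t _.
  by rewrite exprMn -!exprM mulnC; ring.
rewrite E1 (bigD1 k0) //= big1 ?addr0 in E0; last first.
  move=> i ik; case: (boolP (i \in S)) => iS.
    have : root P (z ^+ i).
      rewrite /P -(big_map (fun i : 'I_n => z ^+ i) xpredT (fun x => 'X - x%:P)).
      rewrite root_prod_XsubC; apply: (map_f (fun i : 'I_n => z ^+ i)).
      by rewrite mem_enum in_setD1 ik iS.
    by move/eqP ->; rewrite mulr0.
  by move: iS; rewrite inE negbK => /eqP ->; rewrite !mul0r.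
move/eqP: E0; rewrite !mulf_eq0 expf_eq0 (negbTE g0) andbF orbF.
rewrite (negbTE (_ : c`_k0 != 0)) ?inE //=.
  2: by rewrite -lead_coefE lead_coef_eq0.
apply/negP; rewrite /P horner_prod prodf_seq_neq0; apply/allP => j; rewrite mem_enum !inE => /andP [jk _].
rewrite !hornerE subr_eq0; apply/eqP => h.
have := @prim_inj _ _ _ _ _ pz (ltn_ord k0) (ltn_ord j) h => {}h.
by move: jk; rewrite (_ : j = k0) ?eqxx //; apply: val_inj.
Qed.

Section Fin.
Variables (F : finFieldType) (L : fieldExtType F).

Lemma pnat_card : [pchar L].-nat #|F|.
Proof.
have [p pr pch] := finPcharP F.
have := abelem_pgroup (fin_ring_pchar_abelem pch).
rewrite /pgroup cardsT => H.
rewrite (@eq_pnat _ p) // => x; rewrite pchar_lalg; exact: pcharf_eq.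
Qed.

Lemma frobD (x y : L) : (x + y) ^+ #|F| = x ^+ #|F| + y ^+ #|F|.
Proof. exact: exprDn_pchar pnat_card. Qed.

Lemma frob_alg (a : F) : (a%:A : L) ^+ #|F| = a%:A.
Proof. by rewrite exprZn expr1n expf_card. Qed.

Lemma fixed_in_F (x : L) : x ^+ #|F| = x -> exists a : F, x = a%:A.
Proof.
move=> hx; case: (pickP (fun a : F => x == a%:A)) => [a /eqP -> | hn]; first by exists a.
exfalso.
pose rs := x :: map (in_alg L) (enum F).
pose p : {poly L} := 'X^#|F| - 'X.
have gt1 : (1 < #|F|)%N := finNzRing_gt1 F.
have szp : size p = #|F|.+1.
  by rewrite /p size_polyDl ?size_polyXn ?size_polyN ?size_polyX.
have p0 : p != 0 by rewrite -size_poly_eq0 szp.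
have := @max_poly_roots _ p rs p0.
rewrite szp /rs /= size_map -cardE ltnn.
move=> H; suff: false by []; apply: H.
  apply/andP; split; first by rewrite /root /p !hornerE hx subrr.
  apply/allP => y /mapP [a _ ->]; rewrite /root /p !hornerE /=.
  by rewrite frob_alg subrr.
apply/andP; split.
  by apply/mapP => -[a _ xa]; move: (hn a); rewrite xa eqxx.
rewrite map_inj_uniq ?enum_uniq //; exact: fmorph_inj.
Qed.

Lemma minpoly_dvd (x : L) (mp r : {poly F}) : is_minpoly x mp ->
  root (map_poly (in_alg L) r) x -> mp %| r.
Proof.
case=> mon rt mn rr; rewrite /dvdp; apply/negPn/negP => h.
have : root (map_poly (in_alg L) (r %% mp)) x.
  rewrite map_modp /root.
  move/eqP: rr; rewrite {1}(divp_eq (map_poly (in_alg L) r) (map_poly (in_alg L) mp)).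
  by rewrite hornerD hornerM (eqP rt) mulr0 add0r => ->.
move/(mn _ h); rewrite leqNgt ltn_modp monic_neq0 //.
Qed.

Lemma minpoly_b (b : L) (N j : nat) (mj : {poly F}) :
  N = #|F|.+1 -> N.-primitive_root b -> (0 < j)%N -> (2 * j < N)%N ->
  is_minpoly (b ^+ j) mj ->
  map_poly (in_alg L) mj = ('X - (b ^+ j)%:P) * ('X - (b ^+ (N - j))%:P).
Proof.
move=> hN pb j0 jN hm.
set u := b ^+ j; set v := b ^+ (N - j).
have uv : u * v = 1 by rewrite -exprD subnKC ?prim_expr_order //; lia.
have bN : b ^+ N = 1 := prim_expr_order pb.
have uq : u ^+ #|F| = v.
  rewrite -exprM (_ : (j * #|F| = N * (j - 1) + (N - j))%N); last by rewrite hN; nia.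
  by rewrite exprD exprM bN expr1n mul1r.
have vq : v ^+ #|F| = u.
  rewrite -exprM (_ : ((N - j) * #|F| = N * (N - j - 1) + j)%N); last by rewrite hN; nia.
  by rewrite exprD exprM bN expr1n mul1r.
have [a ha] : exists a : F, u + v = a%:A.
  by apply: fixed_in_F; rewrite frobD uq vq addrC.
pose P : {poly F} := 'X^2 - a%:P * 'X + 1.
have mP : map_poly (in_alg L) P = ('X - u%:P) * ('X - v%:P).
  rewrite /P rmorphD rmorphB /= map_polyXn rmorphM /= map_polyX map_polyC rmorph1 /=.
  rewrite -ha polyCD.
  have e1 : (1 : {poly L}) = u%:P * v%:P by rewrite -polyCM uv.
  rewrite [in LHS]e1; ring.
have rP : root (map_poly (in_alg L) P) u by rewrite mP rootM root_XsubC eqxx.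
have dP := minpoly_dvd hm rP.
have P0 : P != 0 by rewrite -(map_poly_eq0 (in_alg L)) mP mulf_neq0 // polyXsubC_eq0.
have szP : size P = 3%N by rewrite -(size_map_poly (in_alg L)) mP size_mul ?polyXsubC_eq0 // !size_XsubC.
case: hm => mon rt _.
have mj0 : mj != 0 := monic_neq0 mon.
have sz2 : (1 < size mj)%N.
  by rewrite -(size_map_poly (in_alg L)); apply: root_size_gt1 rt; rewrite map_poly_eq0.
have sz3 : (size mj <= 3)%N by rewrite -szP dvdp_leq.
have : size mj = 3%N.
  apply/eqP; rewrite eqn_leq sz3 /= ltnNge; apply/negP => s2.
  have s2' : size mj = 2%N by apply/eqP; rewrite eqn_leq s2 sz2.
  have lc : mj`_1 = 1 by move/monicP: mon; rewrite lead_coefE s2'.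
  have mjE : mj = 'X + (mj`_0)%:P.
    apply/polyP => i; rewrite coefD coefX coefC.
    case: i => [|[|i]] /=; rewrite ?addr0 ?add0r ?lc //.
    by rewrite nth_default // s2'.
  move: rt; rewrite mjE rmorphD /= map_polyX map_polyC /= /root !hornerE addr_eq0 => /eqP hu.
  have : u ^+ #|F| = u by rewrite /u hu -scaleNr frob_alg.
  rewrite uq => /(prim_inj pb) h.
  have : (N - j < N)%N by lia.
  have : (j < N)%N by lia.
  move=> h1 h2; have := h h2 h1; lia.
move=> s3; have : mj %= P by rewrite -dvdp_size_eqp // s3 szP.
have mP' : P \is monic.
  by rewrite -(map_monic (in_alg L)) mP monicMl ?monicXsubC.
by rewrite eqp_monic // => /eqP ->.
Qed.
End Fin.

Fixpoint ek (N s k : nat) : seq nat :=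
  if k is k'.+1 then (1 + 2 * s)%N :: (N - (1 + 2 * s))%N :: ek N s.+1 k' else [::].

Lemma mem_ek N s k e : e \in ek N s k ->
  exists i, (s <= i < s + k)%N /\ (e = 1 + 2 * i \/ e = N - (1 + 2 * i))%N.
Proof.
elim: k s => [|k IH] s //=; rewrite !inE => /orP [/eqP ->|/orP [/eqP ->|/IH [i [ik h]]]].
- by exists s; split; [lia | left].
- by exists s; split; [lia | right].
- by exists i; split => //; lia.
Qed.

Lemma size_ek N s k : size (ek N s k) = (2 * k)%N.
Proof. by elim: k s => //= k IH s; rewrite IH; lia. Qed.

Lemma uniq_ek N s k : (4 * (s + k) < N + 2)%N -> uniq (ek N s k).
Proof.
elim: k s => [|k IH] s //= hk; rewrite IH ?andbT; last by lia.
rewrite inE negb_or; apply/andP; split; [apply/andP; split|].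
- by apply/eqP; lia.
- by apply/negP => /mem_ek [i [ik [h|h]]]; lia.
- by apply/negP => /mem_ek [i [ik [h|h]]]; lia.
Qed.

Lemma ek_bound N s k e : (4 * (s + k) < N + 2)%N -> e \in ek N s k -> (0 < e < N)%N.
Proof. by move=> hk /mem_ek [i [ik [->| ->]]]; lia. Qed.

Lemma ek_odd N s k e : ~~ odd N -> (4 * (s + k) < N + 2)%N -> e \in ek N s k -> odd e.
Proof.
move=> hN hk /mem_ek [i [ik [->| ->]]]; first by rewrite oddD oddM.
rewrite oddB ?oddD ?oddM ?(negbTE hN) //; lia.
Qed.

Lemma ek_mem N s k i : (s <= i < s + k)%N ->
  ((1 + 2 * i)%N \in ek N s k) && ((N - (1 + 2 * i))%N \in ek N s k).
Proof.
elim: k s => [|k IH] s hi; first by lia.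
rewrite /= !inE; case: (eqVneq i s) => [->|ne]; first by rewrite !eqxx !orbT.
have /andP [h1 h2] := IH s.+1 (ltac:(lia)); by rewrite h1 h2 !orbT.
Qed.

Lemma notin_pow (K : fieldType) (b : K) N s k a : N.-primitive_root b ->
  (4 * (s + k) < N + 2)%N -> (a < N)%N -> a \notin ek N s k ->
  b ^+ a \notin [seq b ^+ e | e <- ek N s k].
Proof.
move=> pb hk ha hn; apply/mapP => -[e ein eq].
have := ek_bound hk ein => /andP [_ eN].
by move: hn; rewrite (prim_inj pb ha eN eq) ein.
Qed.

Lemma gen_map (F : finFieldType) (L : fieldExtType F) (b : L) (m : nat -> {poly F}) (N k : nat) :
  N = #|F|.+1 -> N.-primitive_root b -> (forall j, is_minpoly (b ^+ j) (m j)) ->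
  forall s, (4 * (s + k) < N + 2)%N ->
  map_poly (in_alg L) (\big[@polylcm F/1]_(i < k) m (1 + 2 * (s + i))%N) =
  \prod_(e <- ek N s k) ('X - (b ^+ e)%:P).
Proof.
move=> hN pb hm; elim: k => [|k IH] s hk.
  by rewrite big_ord0 big_nil rmorph1.
rewrite big_ord_recl /=.
set G := \big[_/_]_(i < k) _.
have -> : G = \big[@polylcm F/1]_(i < k) m (1 + 2 * (s.+1 + i))%N.
  by apply: eq_bigr => i _; rewrite /bump /= (_ : (s + (1 + i) = s.+1 + i)%N) //; lia.
have mG := IH s.+1 (ltac:(lia)).
have mk := minpoly_b hN pb (ltac:(lia) : (0 < 1 + 2 * (s + 0))%N) (ltac:(lia)) (hm _).
set G' := \big[_/_]_(i < k) _.
have monG : G' \is monic by rewrite -(map_monic (in_alg L)) mG monic_prod_XsubC.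
have monm : m (1 + 2 * (s + 0))%N \is monic by case: (hm (1 + 2 * (s + 0))%N).
rewrite polylcm_coprime //; last first.
  rewrite coprimep_sym -(coprimep_map (in_alg L)) mG mk coprimepMr !coprimep_XsubC.
  rewrite -(big_map (fun e => b ^+ e) xpredT (fun x => 'X - x%:P)) !root_prod_XsubC.
  have := uniq_ek hk; rewrite /= !inE negb_or addn0 => /andP [/andP [_ h1] /andP [h2 _]].
  have hk' : (4 * (s.+1 + k) < N + 2)%N by lia.
  by rewrite !(notin_pow pb hk') //; lia.
by rewrite rmorphM /= mG mk /= !big_cons addn0 mulrA.
Qed.
Lemma memC_char (F : finFieldType) n (g : {poly F}) : (0 < n)%N -> g %| 'X^n + 1 -> g != 0 ->
  forall c : 'rV[F]_n, (c \in negacyclic_code n g) = (g %| rVpoly c).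
Proof.
move=> n0 gd g0 c; rewrite inE; apply/existsP/idP => [[a /eqP ->]|gc].
  by rewrite -dvdp_mod // dvdp_mull.
exists (poly_rV (rVpoly c %/ g)); apply/eqP.
have szc : (size (rVpoly c) <= n)%N by apply: size_poly.
rewrite poly_rV_K; last by rewrite size_divp //; apply: leq_trans (leq_subr _ _) szc.
rewrite divpK // modp_small // size_polyDl ?size_polyXn ?size_poly1 //.
Qed.

Lemma dim_code (F : finFieldType) n (g : {poly F}) (C : {set 'rV[F]_n}) :
  (forall c, (c \in C) = (g %| rVpoly c)) -> (size g <= n)%N -> g != 0 ->
  \dim <<enum C>> = (n - (size g).-1)%N.
Proof.
move=> memC szg g0; set K := (n - (size g).-1)%N.
pose f (x : 'rV[F]_K) : 'rV[F]_n := poly_rV (rVpoly x * g).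
have lin_f : linear f.
  by move=> a x y; rewrite /f linearP /= mulrDl -scalerAl linearP.
pose flM := GRing.isLinear.Build _ _ _ _ f lin_f.
pose fL : {linear _ -> _} := HB.pack f flM.
pose h := linfun fL.
have hE x : h x = poly_rV (rVpoly x * g) by rewrite lfunE.
have szg1 : (0 < size g)%N by rewrite size_poly_gt0.
have szx (x : 'rV[F]_K) : (size (rVpoly x * g)%R <= n)%N.
  apply: leq_trans (size_mul_leq _ _) _.
  have := size_poly K (fun k => if insub k is Some i then x 0 i else 0).
  rewrite -/(rVpoly x); lia.
have -> : <<enum C>>%VS = (h @: fullv)%VS.
  apply/eqP; rewrite eqEsubv; apply/andP; split.
    apply/span_subvP => c; rewrite mem_enum memC => gc.
    apply/memv_imgP; exists (poly_rV (rVpoly c %/ g)); first exact: memvf.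
    have szc : (size (rVpoly c) <= n)%N by apply: size_poly.
    rewrite hE poly_rV_K; first by rewrite divpK // rVpolyK.
    by rewrite size_divp //; apply: leq_sub2r.
  apply/subvP => w /memv_imgP [u _ ->]; apply: memv_span.
  by rewrite mem_enum memC hE poly_rV_K ?dvdp_mull.
rewrite limg_dim_eq ?dimvf /dim /= ?mul1n //.
have /eqP -> : lker h == 0%VS.
  apply/lker0P => x y; rewrite !hE => /(congr1 rVpoly).
  rewrite !poly_rV_K // => /(mulIf g0) /(congr1 (@poly_rV _ K)).
  by rewrite !rVpolyK.
exact: capv0.
Qed.

Theorem proposition9 (F : finFieldType) (L : fieldExtType F) (beta : L)
    (m : nat -> {poly F}) (delta : nat) :
  odd #|F| ->
  let q := #|F| in
  let n := q.+1./2 in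
  (2 * n).-primitive_root beta ->
  (forall j : nat, is_minpoly (beta ^+ j) (m j)) ->
  (2 <= delta)%N -> (delta <= (q + 3) %/ 4)%N ->
  let C := negacyclic_code n (bch_gen m delta) in
  [/\ code_dim C = (n - 2 * (delta - 1))%N,
      is_min_distance C (2 * delta - 1)%N
    & is_MDS C].
Proof.
move=> Fodd q n pb hm d2 dq C.
have hN : (2 * n = #|F|.+1)%N.
  have := odd_double_half q.+1; rewrite /= Fodd /= add0n -/n => <-.
  by rewrite -mul2n.
have n0 : (0 < n)%N by lia.
have d4 : (delta * 4 <= q + 3)%N by rewrite -leq_divRL.
set k := delta.-1.
have hk : (4 * (0 + k) < 2 * n + 2)%N by rewrite hN /k; lia.
have gE : map_poly (in_alg L) (bch_gen m delta) = \prod_(e <- ek (2 * n) 0 k) ('X - (beta ^+ e)%:P).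
  rewrite -(gen_map hN pb hm hk) /bch_gen; congr map_poly.
set g := bch_gen m delta in gE C *.
have szg : size g = (2 * k).+1.
  by rewrite -(size_map_poly (in_alg L)) gE size_prod_XsubC size_ek.
have g0 : g != 0 by rewrite -size_poly_eq0 szg.
have bn : beta ^+ n = -1.
  have : (beta ^+ n) ^+ 2 == 1 by rewrite -exprM mulnC prim_expr_order.
  rewrite sqrf_eq1 => /orP [h|/eqP //]; exfalso.
  move: h; rewrite -(prim_order_dvd pb) => /(dvdn_leq n0); lia.
have N2 : ~~ odd (2 * n) by rewrite oddM.
have gdiv : g %| 'X^n + 1.
  rewrite -(dvdp_map (in_alg L)) gE rmorphD /= map_polyXn rmorph1.
  rewrite -(big_map (fun e => beta ^+ e) xpredT (fun x => 'X - x%:P)); apply: uniq_roots_dvdp.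
    apply/allP => x /mapP [e ein ->]; rewrite /root !hornerE -exprM mulnC exprM bn.
    by rewrite -signr_odd (ek_odd N2 hk ein) expr1 addNr.
  rewrite uniq_rootsE map_inj_in_uniq ?uniq_ek // => x y xi yi.
  have /andP [_ xb] := ek_bound hk xi; have /andP [_ yb] := ek_bound hk yi.
  exact: prim_inj pb xb yb.
have memC := memC_char n0 gdiv g0.
have szgn : (size g <= n)%N by rewrite szg /k; lia.
have dimC : code_dim C = (n - 2 * (delta - 1))%N.
  by rewrite /code_dim (dim_code memC szgn g0) szg /k; congr (_ - _)%N; lia.
have wt : forall c, c \in C -> c != 0 -> (2 * delta - 1 <= #|[set i : 'I_n | (c 0 i != 0)%R]|)%N.
  move=> c cC c0.
  have cp0 : rVpoly c != 0.
    by apply: contraNneq c0 => h; rewrite -(rVpolyK c) h linear0.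
  have pz : n.-primitive_root (beta ^+ 2).
    have := dvdn_prim_root pb (dvdn_mull 2 (dvdnn n)); rewrite mulnK //.
  have := @bch _ (beta ^+ 2) (beta ^+ (2 * n - (2 * k - 1))) n (2 * k)
            (map_poly (in_alg L) (rVpoly c)) pz.
  have -> : [set i : 'I_n | (map_poly (in_alg L) (rVpoly c))`_i != 0] = [set i : 'I_n | c 0 i != 0].
    apply/setP => i; rewrite !inE coef_map /= coef_rVpoly_ord.
    by rewrite scaler_eq0 oner_eq0 orbF.
  have e2 : (2 * delta - 1 = (2 * k).+1)%N by rewrite /k; lia.
  rewrite e2; apply.
  - by rewrite expf_neq0 // (prim_root_eq0 pb) -lt0n; lia.
  - by rewrite size_map_poly; apply: size_poly.
  - by rewrite map_poly_eq0.
  move=> t tk; apply: (root_dvdp (p := map_poly (in_alg L) g)).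
    by rewrite dvdp_map -memC.
  rewrite gE -(big_map (fun e => beta ^+ e) xpredT (fun x => 'X - x%:P)) root_prod_XsubC.
  rewrite -exprM -exprD.
  case: (ltnP t k) => tk'.
    have -> : (2 * n - (2 * k - 1) + 2 * t = 2 * n - (1 + 2 * (k - 1 - t)))%N by lia.
    apply: map_f.
    by have /andP [_ h] := @ek_mem (2 * n) 0 k (k - 1 - t) (ltac:(lia)).
  have -> : (2 * n - (2 * k - 1) + 2 * t = 2 * n + (1 + 2 * (t - k)))%N by lia.
  rewrite exprD prim_expr_order // mul1r; apply: map_f.
  by have /andP [h _] := @ek_mem (2 * n) 0 k (t - k) (ltac:(lia)).
have hd : forall c c' : 'rV[F]_n,
    hamming_dist c c' = #|[set i : 'I_n | ((c - c') 0 i != 0)%R]|.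
  by move=> c c'; apply: eq_card => i; rewrite !inE mxE [(- c') 0 i]mxE subr_eq0.
have subC : forall c c', c \in C -> c' \in C -> c - c' \in C.
  by move=> x y; rewrite !memC linearB /=; apply: dvdp_sub.
have gC : poly_rV g \in C by rewrite memC poly_rV_K.
have zC : (0 : 'rV[F]_n) \in C by rewrite memC linear0 dvdp0.
have gnz : poly_rV g != 0 :> 'rV[F]_n.
  by apply: contraNneq g0 => h; rewrite -(poly_rV_K szgn) h linear0.
have wg : (#|[set i : 'I_n | ((poly_rV g : 'rV[F]_n) 0 i != 0)%R]| <= 2 * delta - 1)%N.
  rewrite cardE -(size_map val).
  have -> : (2 * delta - 1 = size (iota 0 (size g)))%N by rewrite size_iota szg /k; lia.
  apply: uniq_leq_size; first by rewrite map_inj_uniq ?enum_uniq //; exact: val_inj.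
  move=> x /mapP [i]; rewrite mem_enum inE mxE => hi ->; rewrite mem_iota /=.
  by move: hi; apply: contraNT; rewrite -leqNgt => h; rewrite nth_default.
have md : is_min_distance C (2 * delta - 1).
  split.
    exists (poly_rV g), 0; split => //; rewrite hd subr0; apply/eqP.
    by rewrite eqn_leq wg wt.
  move=> c c' cC c'C ne; rewrite hd; apply: wt; first exact: subC.
  by rewrite subr_eq0.
split => //; exists (2 * delta - 1)%N; split => //.
rewrite dimC; lia.
Qed.
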